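(* Let $k$ be a squarefree positive integer with at most two distinct prime factors. Then every $n\in\mathbb N$ with $\kappa(n)=k$ satisfies $h(\Phi^*_n)=1$; that is, $\{h(\Phi^*_n):\kappa(n)=k\}=\{1\}$.
   Context: $d\mid\mid n$ means $d\mid n$ and $\gcd(d,n/d)=1$; $(j,n)_*=\max\{d: d\mid j,\ d\mid\mid n\}$; $\Phi^*_n(x)=\prod_{1\le j\le n,\ (j,n)_*=1}(x-e^{2\pi i j/n})$ (a polynomial with integer coefficients). $\kappa(n)=\prod_{p\mid n}p$ is the squarefree kernel. The height $h(f)$ of a polynomial $f$ is the maximum absolute value of its coefficients. *)

(* Defs.v *)
From HB Require Import structures.
From mathcomp Require Import all_boot all_order all_algebra all_field.
Set Implicit Arguments. Unset Strict Implicit. Unset Printing Implicit Defensive.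
Import Order.TTheory GRing.Theory Num.Theory.
Local Open Scope ring_scope.

Definition unitary_div (d n : nat) : bool := (d %| n)%N && coprime d (n %/ d).

Definition ugcd (j n : nat) : nat :=
  \max_(0 <= d < n.+1 | (d %| j)%N && unitary_div d n) d.

Definition kappa (n : nat) : nat := \prod_(p <- primes n) p.

Definition squarefree (k : nat) : Prop := forall p, prime p -> ~~ (p ^ 2 %| k)%N.

Definition zeta (n : nat) : algC := let: exist z _ := C_prim_root_exists (ltn0Sn n.-1) in z.

Definition Phistar (n : nat) : {poly algC} :=
  \prod_(1 <= j < n.+1 | ugcd j n == 1%N) ('X - (zeta n ^+ j)%:P).

Definition height_eq (f : {poly algC}) (h : algC) : Prop :=
  (forall i, `|f`_i| <= h) /\ (exists i, `|f`_i| = h).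

(* Main.v *)
Require Import Defs.
From HB Require Import structures.
From mathcomp Require Import all_boot all_order all_algebra all_field.
From mathcomp Require Import zify ring.
Import Order.TTheory GRing.Theory Num.Theory.
Local Open Scope ring_scope.

Lemma ugcd_ge1 j n : (0 < n)%N -> (1 <= ugcd j n)%N.
Proof.
move=> n0; rewrite /ugcd; apply: (@leq_bigmax_seq _ _ _ (fun d => d) 1%N).
  by rewrite mem_index_iota.
by rewrite dvd1n /unitary_div dvd1n coprime1n.
Qed.

Lemma ugcd_eq1P j n : (0 < n)%N ->
  reflect (forall d, (d %| j)%N -> unitary_div d n -> (d <= 1)%N) (ugcd j n == 1%N).
Proof.
move=> n0; rewrite eqn_leq ugcd_ge1 // andbT.
apply: (iffP (bigmax_leqP_seq _ _ _ _)) => H d.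
  move=> dj ud; apply: H; [rewrite mem_index_iota /= | by rewrite dj].
  move: ud => /andP [dn _]; rewrite ltnS; exact: dvdn_leq.
by move=> _ /andP [dj ud]; apply: H.
Qed.

Lemma key_unit p d n : (0 < n)%N -> prime p -> (p %| d)%N -> unitary_div d n ->
  (p ^ logn p n %| d)%N.
Proof.
move=> n0 pp pd /andP [dn cop].
have d0 : (0 < d)%N by apply: dvdn_gt0 dn.
have npd : ~~ (p %| n %/ d)%N.
  apply/negP => pnd; move: cop; rewrite /coprime => /eqP g1.
  have : (p %| gcdn d (n %/ d))%N by rewrite dvdn_gcd pd pnd.
  by rewrite g1 dvdn1 => /eqP p1; rewrite p1 in pp.
have cp : coprime (p ^ logn p n) (n %/ d).
  by apply: coprimeXl; rewrite prime_coprime.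
by rewrite -(Gauss_dvdl _ cp) mulnC divnK //; exact: pfactor_dvdnn.
Qed.

Lemma ugcd1_all j n : (0 < n)%N ->
  (ugcd j n == 1%N) = all (fun p => ~~ (p ^ logn p n %| j))%N (primes n).
Proof.
move=> n0; apply/idP/allP => [/(@ugcd_eq1P j n n0) H | H].
  move=> p pn; apply/negP => pj.
  move: (pn); rewrite mem_primes => /and3P [pp _ pdn].
  have lp : (0 < logn p n)%N by rewrite logn_gt0.
  have ud : unitary_div (p ^ logn p n) n.
    rewrite /unitary_div pfactor_dvdnn /=.
    case: (pfactor_coprime pp n0) => m cpm nE.
    rewrite {2}nE mulnK ?expn_gt0 ?prime_gt0 //; exact: coprimeXl.
  have := H _ pj ud.
  rewrite leqNgt; move/negP; apply.
  by rewrite -{1}(expn0 p) ltn_exp2l ?prime_gt1.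
apply/(@ugcd_eq1P j n n0) => d dj ud; rewrite leqNgt; apply/negP => d1.
have rp := pdiv_prime d1; have rd := pdiv_dvd d.
have rn : pdiv d \in primes n.
  move: ud => /andP [dn _]; rewrite mem_primes rp n0 /=; exact: dvdn_trans dn.
have := H _ rn; move/negP; apply.
exact: dvdn_trans (key_unit _ _ _ n0 rp rd ud) dj.
Qed.
Lemma reindex_dvd (R : comNzRingType) (F : nat -> R) (P m : nat) : (0 < P)%N ->
  \prod_(0 <= j < m * P | (P %| j)%N) F j = \prod_(0 <= t < m) F (t * P)%N.
Proof.
move=> P0; elim: m => [|m IH]; first by rewrite mul0n !big_geq.
rewrite (big_cat_nat _ (n := (m * P)%N)) ?leq_mul //= IH big_nat_recr //=.
congr (_ * _); rewrite mulSn addnC big_mkcond big_ltn; last by rewrite -addn1 leq_add2l.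
rewrite (dvdn_mull m (dvdnn P)).
rewrite big_nat big1 ?Monoid.mulm1 // => j /andP [lj hj].
have -> : j = (m * P + (j - m * P))%N by rewrite subnKC // ltnW.
rewrite dvdn_addr ?dvdn_mull //.
case: ifP => // /dvdn_leq; rewrite subn_gt0 lj => /(_ isT).
move=> h; exfalso; lia.
Qed.

Lemma shift_range (R : comNzRingType) (F : nat -> R) (C : pred nat) n :
  ~~ C 0%N -> ~~ C n ->
  \prod_(1 <= j < n.+1 | C j) F j = \prod_(0 <= j < n | C j) F j.
Proof.
move=> c0 cn.
have := @big_ltn_cond R 1 *%R 0 n.+1 C F (ltn0Sn n); rewrite /= (negbTE c0) => <-.
rewrite (big_cat_nat _ (n := n)) //= [X in _ * X]big_mkcond big_nat1 (negbTE cn).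
by rewrite Monoid.mulm1.
Qed.

Lemma zetaP n : (0 < n)%N -> n.-primitive_root (zeta n).
Proof. by move=> n0; rewrite /zeta; case: C_prim_root_exists; rewrite prednK. Qed.

Arguments zetaP {n}.

Definition g n j : {poly algC} := 'X - (zeta n ^+ j)%:P.

Lemma prod_all n : (0 < n)%N -> \prod_(0 <= j < n) g n j = 'X^n - 1.
Proof. by move=> n0; rewrite -(factor_Xn_sub_1 (zetaP n0)). Qed.

Lemma prod_dvd n P Q : (0 < P)%N -> (0 < Q)%N -> n = (P * Q)%N ->
  \prod_(0 <= j < n | (P %| j)%N) g n j = 'X^Q - 1.
Proof.
move=> P0 Q0 nE.
have n0 : (0 < n)%N by rewrite nE muln_gt0 P0.
have Qn : (Q %| n)%N by rewrite nE dvdn_mull.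
have := dvdn_prim_root (zetaP n0) Qn; rewrite {2}nE mulnK // => pr'.
rewrite {1}nE mulnC reindex_dvd // -(factor_Xn_sub_1 pr').
by apply: eq_bigr => t _; rewrite /g mulnC exprM.
Qed.

Definition Cn n j := all (fun p => ~~ (p ^ logn p n %| j))%N (primes n).

Lemma Phistar_E n : (0 < n)%N -> primes n != [::] ->
  Phistar n = \prod_(0 <= j < n | Cn n j) g n j.
Proof.
move=> n0; case E: (primes n) => [//|p s] _.
rewrite /Phistar (eq_bigl (Cn n)) => [|j]; last by rewrite ugcd1_all.
by apply: shift_range; rewrite /Cn E /= ?dvdn0 ?pfactor_dvdnn.
Qed.
Lemma uniq_rep P Q i i' j j' : coprime P Q -> (i < Q)%N -> (i' < Q)%N ->
  (i * P + j * Q = i' * P + j' * Q)%N -> i = i'.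
Proof.
move=> cPQ iQ i'Q.
wlog le : i i' j j' iQ i'Q / (i <= i')%N.
  move=> W E; case: (leqP i i') => h; first exact: W E.
  by symmetry; apply: (W i' i j' j) => //; apply: ltnW.
move=> E.
have E2 : ((i' - i) * P = (j - j') * Q)%N.
  rewrite !mulnBl; lia.
have : (Q %| i' - i)%N.
  rewrite -(@Gauss_dvdl _ _ P); last by rewrite coprime_sym.
  by rewrite E2 dvdn_mull.
case: (posnP (i' - i)) => [h _ | h /(dvdn_leq h) ?]; first lia.
lia.
Qed.

Lemma Xn1_neq0 k : (0 < k)%N -> ('X^k - 1 : {poly algC}) != 0.
Proof. by move=> k0; rewrite -polyC1 monic_neq0 // monicXnsubC. Qed.

Lemma norm_bool (x y : bool) : `|(x%:R : algC) - y%:R| <= 1.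
Proof. by case: x; case: y; rewrite ?subrr ?subr0 ?sub0r ?normrN ?normr1 ?normr0 ?ler01. Qed.

Lemma coefGH P Q m : coprime P Q ->
  ((\sum_(i < Q) ('X^P) ^+ i) * (\sum_(j < P) ('X^Q) ^+ j) : {poly algC})`_m
  = ([exists ij : 'I_Q * 'I_P, m == P * ij.1 + Q * ij.2]%N : bool)%:R.
Proof.
move=> cPQ.
rewrite big_distrlr /= pair_big /= coef_sum.
under eq_bigr => ij _ do rewrite -!exprM -exprD coefXn.
case: existsP => [[ij0 /eqP E0] | NE].
  rewrite (bigD1 ij0) //= E0 eqxx big1 ?addr0 // => ij ne.
  case: eqP => // E; case/negP: ne.
  case: ij0 E0 E => [i0 j0]; case: ij => [i j] /= E0 E.
  have EE : (P * i + Q * j = P * i0 + Q * j0)%N by rewrite -E -E0.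
  have ei : i = i0 :> nat.
    apply: (@uniq_rep P Q i i0 j j0 cPQ) => //.
    by rewrite [(i * P)%N]mulnC [(i0 * P)%N]mulnC [(j * Q)%N]mulnC [(j0 * Q)%N]mulnC.
  have Q0 : (0 < Q)%N by apply: leq_ltn_trans (ltn_ord i).
  have ej : j = j0 :> nat.
    apply/eqP; rewrite -(eqn_pmul2l Q0); apply/eqP.
    by move: EE; rewrite ei => /addnI.
  by apply/eqP; congr (_, _); apply/val_inj.
rewrite big1 // => ij _; case: eqP => // E; case: NE; exists ij; apply/eqP.
by rewrite E.
Qed.

Lemma norm_bool1 (x : bool) : `|(x%:R : algC)| <= 1.
Proof. by case: x; rewrite ?normr1 ?normr0 ?ler01. Qed.

Lemma height_binary (Phi : {poly algC}) P Q : (0 < P)%N -> (0 < Q)%N -> coprime P Q ->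
  Phi * ('X^P - 1) * ('X^Q - 1) = ('X^(P * Q) - 1) * ('X - 1) ->
  (size Phi <= P * Q)%N -> height_eq Phi 1.
Proof.
move=> P0 Q0 cPQ E hs.
set G : {poly algC} := \sum_(i < Q) ('X^P) ^+ i.
set H : {poly algC} := \sum_(j < P) ('X^Q) ^+ j.
have eG : 'X^(P * Q) - 1 = ('X^P - 1) * G by rewrite exprM subrX1.
have eH : 'X^(P * Q) - 1 = ('X^Q - 1) * H by rewrite mulnC exprM subrX1.
have e1 : Phi * ('X^Q - 1) = G * ('X - 1).
  apply: (mulfI (Xn1_neq0 _ P0)).
  have -> : ('X^P - 1) * (Phi * ('X^Q - 1)) = Phi * ('X^P - 1) * ('X^Q - 1) by ring.
  by rewrite E eG; ring.
have e2 : Phi * ('X^(P * Q) - 1) = G * H * 'X - G * H.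
  rewrite eH.
  have -> : Phi * (('X^Q - 1) * H) = (Phi * ('X^Q - 1)) * H by ring.
  by rewrite e1; ring.
have PQ0 : (0 < P * Q)%N by rewrite muln_gt0 P0.
have cP m : (m < P * Q)%N -> Phi`_m = (G * H)`_m - (if m == 0%N then 0 else (G * H)`_m.-1).
  move=> hm; have := congr1 (fun p : {poly algC} => p`_m) e2.
  rewrite /= mulrBr mulr1 !coefB coefMXn hm coefMX sub0r.
  by move/eqP; rewrite eqr_oppLR => /eqP ->; rewrite opprB.
split.
  move=> i; case: (ltnP i (P * Q)) => hi.
    rewrite cP // !coefGH //; case: eqP => _; first by rewrite subr0 norm_bool1.
    exact: norm_bool.
  by rewrite nth_default ?normr0 ?ler01 // (leq_trans hs).
exists 0%N; rewrite cP // eqxx subr0 coefGH //.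
have -> : [exists ij : 'I_Q * 'I_P, 0%N == P * ij.1 + Q * ij.2]%N.
  by apply/existsP; exists (Ordinal Q0, Ordinal P0); rewrite /= !muln0.
by rewrite normr1.
Qed.

Lemma n_decomp n : (0 < n)%N -> n = (\prod_(p <- primes n) p ^ logn p n)%N.
Proof. by move=> n0; rewrite {1}(prod_prime_decomp n0) prime_decompE big_map. Qed.

Lemma kappa_sqf k : (0 < k)%N -> squarefree k -> kappa k = k.
Proof.
move=> k0 sk; rewrite {2}(n_decomp _ k0) /kappa.
apply: eq_big_seq => p; rewrite mem_primes => /and3P [pp _ pk].
have : (logn p k <= 1)%N.
  rewrite leqNgt -(pfactor_dvdn 2 pp k0); exact: sk.
have : (0 < logn p k)%N by rewrite logn_gt0 mem_primes pp k0.
by case: (logn p k) => [|[|]].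
Qed.

Lemma primes_kappa n k : (0 < n)%N -> (0 < k)%N -> kappa n = k ->
  (size (primes n) <= size (primes k))%N.
Proof.
move=> n0 k0 nk; apply: uniq_leq_size; first exact: primes_uniq.
move=> r rn; rewrite mem_primes k0 -nk /kappa (big_rem _ rn) /= dvdn_mulr //.
by move: rn; rewrite mem_primes => /andP [->].
Qed.

Lemma size_Phistar n : (0 < n)%N -> ~~ Cn n 0 ->
  (size (\prod_(0 <= j < n | Cn n j) g n j)%R <= n)%N.
Proof.
move=> n0 c0; rewrite -big_filter /g size_prod_XsubC.
case: n n0 c0 => // n' _ c0.
rewrite /index_iota subn0 /= (negbTE c0) ltnS.
by rewrite size_filter (leq_trans (count_size _ _)) // size_iota.
Qed.

Lemma caseA : height_eq (Phistar 1) 1.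
Proof.
have z1 : zeta 1 = 1.
  by have := prim_expr_order (@zetaP 1 isT); rewrite expr1.
have -> : Phistar 1 = 'X - 1.
  have p1 : primes 1 = [::] by [].
  rewrite /Phistar big_mkcond big_nat1 ugcd1_all // p1 /=.
  by rewrite expr1 z1 polyC1.
have cE i : ('X - 1 : {poly algC})`_i = (i == 1%N)%:R - (i == 0%N)%:R.
  by rewrite coefB coefX coef1.
split; first by move=> i; rewrite cE norm_bool.
by exists 0%N; rewrite cE /= sub0r normrN normr1.
Qed.

Lemma caseB n p : (0 < n)%N -> primes n = [:: p] -> height_eq (Phistar n) 1.
Proof.
move=> n0 E.
have nE : n = (p ^ logn p n)%N by rewrite {1}(n_decomp _ n0) E big_seq1.
have CE j : Cn n j = ~~ (n %| j)%N by rewrite /Cn E /= andbT -nE.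
have ne : primes n != [::] by rewrite E.
have PhiE := Phistar_E _ n0 ne.
have e1 : ('X - 1) * Phistar n = 'X^n - 1.
  rewrite -(prod_all _ n0) (bigID (fun j => (n %| j)%N)) /=.
  rewrite (prod_dvd n n 1%N) ?muln1 // expr1 PhiE.
  by congr (_ * _); apply: eq_bigl => j; rewrite CE.
have e2 : Phistar n = \poly_(i < n) 1.
  apply: (mulfI (Xn1_neq0 _ (ltn0Sn 0))); rewrite expr1 e1 subrX1.
  by rewrite poly_def; congr (_ * _); apply: eq_bigr => i _; rewrite scale1r.
rewrite e2; split.
  by move=> i; rewrite coef_poly; case: ifP; rewrite ?normr1 ?normr0 ?ler01.
by exists 0%N; rewrite coef_poly n0 normr1.
Qed.

Lemma caseC n p q : (0 < n)%N -> primes n = [:: p; q] -> height_eq (Phistar n) 1.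
Proof.
move=> n0 E.
set P := (p ^ logn p n)%N; set Q := (q ^ logn q n)%N.
have nE : n = (P * Q)%N.
  by rewrite {1}(n_decomp _ n0) E big_cons big_seq1.
have pp : prime p by have := mem_primes p n; rewrite E inE eqxx /= => /esym /and3P [].
have qp : prime q by have := mem_primes q n; rewrite E !inE eqxx orbT => /esym /and3P [].
have pq : p != q.
  have := sorted_primes n; rewrite E /= andbT => /ltn_eqF ->; done.
have cPQ : coprime P Q.
  by apply: coprimeXl; apply: coprimeXr; rewrite prime_coprime // dvdn_prime2.
have P0 : (0 < P)%N by rewrite expn_gt0 prime_gt0.
have Q0 : (0 < Q)%N by rewrite expn_gt0 prime_gt0.
have CE j : Cn n j = ~~ (P %| j)%N && ~~ (Q %| j)%N by rewrite /Cn E /= andbT.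
have ne : primes n != [::] by rewrite E.
have PhiE := Phistar_E _ n0 ne.
have c0 : ~~ Cn n 0 by rewrite CE dvdn0.
have eP : \prod_(0 <= j < n | (P %| j)%N) g n j = 'X^Q - 1 by apply: prod_dvd.
have eQ : \prod_(0 <= j < n | (Q %| j)%N) g n j = 'X^P - 1.
  by apply: prod_dvd; rewrite // mulnC.
have eQP : \prod_(0 <= j < n | ((Q %| j) && (P %| j))%N) g n j = 'X - 1.
  rewrite (eq_bigl (fun j => n %| j)%N) => [|j]; last by rewrite andbC nE Gauss_dvd.
  by rewrite (prod_dvd n n 1%N) ?muln1 // expr1.
have eA : 'X^n - 1 = \prod_(0 <= j < n | (P %| j)%N) g n j *
   (\prod_(0 <= j < n | (~~ (P %| j) && (Q %| j))%N) g n j * Phistar n).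
  rewrite -(prod_all _ n0) (bigID (fun j => (P %| j)%N)) /=; congr (_ * _).
  rewrite (bigID (fun j => (Q %| j)%N)) /= PhiE; congr (_ * _).
  by apply: eq_bigl => j; rewrite CE.
have eB : 'X^P - 1 = ('X - 1) * \prod_(0 <= j < n | (~~ (P %| j) && (Q %| j))%N) g n j.
  rewrite -eQ (bigID (fun j => (P %| j)%N)) /= eQP; congr (_ * _).
  by apply: eq_bigl => j; rewrite andbC.
apply: (height_binary _ _ _ P0 Q0 cPQ); last by rewrite -nE PhiE size_Phistar.
rewrite -nE eB eA -eP; ring.
Qed.

Theorem lemma5p4 (k : nat) :
  (0 < k)%N -> squarefree k -> (size (primes k) <= 2)%N ->
  (exists n : nat, (0 < n)%N /\ kappa n = k) /\
  (forall n : nat, (0 < n)%N -> kappa n = k -> height_eq (Phistar n) 1).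
Proof.
move=> k0 sk s2; split; first by exists k; split => //; apply: kappa_sqf.
move=> n n0 nk.
have := leq_trans (primes_kappa _ _ n0 k0 nk) s2.
case E: (primes n) => [|p [|q [|r s]]] // _.
- have n1 : n = 1%N by rewrite (n_decomp _ n0) E big_nil.
  by rewrite n1; apply: caseA.
- exact: (caseB _ _ n0 E).
- exact: (caseC _ _ _ n0 E).
Qed.
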